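(* Let $X$ be a compact metric countable space and $f:X\to X$ a continuous function such that every accumulation point of $X$ is periodic. Let $a$ be an accumulation point of $X$. If there are a sequence $(a_n)_{n\in\mathbb N}$ in $X$ and a periodic point $b\in X\setminus\mathcal O_f(a)$ such that $a_n\to a$ and $b\in\overline{\mathcal O_f(a_n)}$ for every $n\in\mathbb N$, then $f^p$ is discontinuous at $a$ for every $p\in\mathbb N^*$.
   Context: $\mathbb N^*$ denotes the set of free ultrafilters on $\mathbb N$. For $p\in\mathbb N^*$, the $p$-iterate $f^p:X\to X$ is defined by $f^p(x)=p\text{-}\lim_{n\to\infty}f^n(x)$, where $y=p\text{-}\lim x_n$ means $\{n: x_n\in V\}\in p$ for every neighborhood $V$ of $y$. The orbit of $x$ is $\mathcal O_f(x)=\{f^n(x):n\in\mathbb N\}$. A point $x$ is periodic if $f^n(x)=x$ for some $n\ge1$. An accumulation point is a non-isolated point. *)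

(* Defs.v *)
From HB Require Import structures.
From mathcomp Require Import all_boot all_order all_algebra.
From mathcomp Require Import all_classical all_reals all_analysis.
From Stdlib Require Import ClassicalEpsilon.
Set Implicit Arguments. Unset Strict Implicit. Unset Printing Implicit Defensive.
Import Order.TTheory GRing.Theory Num.Theory.
Local Open Scope classical_set_scope.

(* p ∈ ℕ^* : a free (non-principal) ultrafilter on nat, given as a set of sets of nat *)
Definition free_ultrafilter (p : set_system nat) : Prop :=
  UltraFilter p /\ (forall n : nat, ~ p [set n]).

Definition is_plim {X : topologicalType} (p : set_system nat) (x : nat -> X) (y : X) : Prop :=
  forall V : set X, nbhs y V -> p [set n | V (x n)].

(* the p-iterate f^p(x) = p-lim_n f^n(x) (chosen by description; it exists and is
   unique in a compact Hausdorff space) *)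
Definition piterate {X : topologicalType} (p : set_system nat) (f : X -> X) (x : X) : X :=
  epsilon (inhabits x) (is_plim p (fun n => iter n f x)).

Definition forbit {X : Type} (f : X -> X) (x : X) : set X := [set iter n f x | n in [set: nat]].

Definition periodic_point {X : Type} (f : X -> X) (x : X) : Prop :=
  exists n : nat, (1 <= n)%N /\ iter n f x = x.

Definition accumulation_point {X : topologicalType} (x : X) : Prop :=
  ~ nbhs x [set x].

(* Main.v *)
Require Import Defs.
From HB Require Import structures.
From mathcomp Require Import all_boot all_order all_algebra.
From mathcomp Require Import all_classical all_reals all_analysis.
From mathcomp Require Import zify.
From Stdlib Require Import ClassicalEpsilon.
Set Implicit Arguments. Unset Strict Implicit. Unset Printing Implicit Defensive.
Import Order.TTheory GRing.Theory Num.Theory.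
Local Open Scope classical_set_scope.

Section Iter.
Variables (T : Type) (f : T -> T).

Lemma iter_per k z i : iter k f z = z -> iter (k * i) f z = z.
Proof.
move=> hk; elim: i => [|i IH]; first by rewrite muln0.
by rewrite mulnS iterD IH hk.
Qed.

Lemma iter_mod k z i : iter k f z = z -> iter i f z = iter (i %% k) f z.
Proof.
move=> hk; by rewrite {1}(divn_eq i k) addnC iterD mulnC iter_per.
Qed.

Lemma iter_back k y m : (1 <= k)%N -> iter k f y = y ->
  iter (k * m - m) f (iter m f y) = y.
Proof.
move=> k1 hk; rewrite -iterD subnK ?iter_per //.
by rewrite leq_pmull.
Qed.

Lemma orbit_sub z c : periodic_point f z -> forbit f z c -> forbit f c `<=` forbit f z.
Proof.
move=> [k [k1 hk]] [j _ <-] y [i _ <-].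
exists (i + j) => //; by rewrite iterD.
Qed.

Lemma orbit_sub' z c : periodic_point f z -> forbit f z c -> forbit f z `<=` forbit f c.
Proof.
move=> [k [k1 hk]] [j _ <-] y [i _ <-].
exists (i + (k * j - j)) => //; by rewrite iterD iter_back.
Qed.
End Iter.
Section Top.
Variables (R : realType) (X : metricType R) (f : X -> X).
Hypothesis fcont : continuous f.

Definition omega (x : X) := [set y : X | forall V : set X, nbhs y V -> forall N,
  exists2 t, (N <= t)%N & V (iter t f x)].

Lemma nbhs_iter m y V : nbhs (iter m f y) V -> nbhs y (iter m f @^-1` V).
Proof.
elim: m V => [//|m IH] V HV.
have := IH (f @^-1` V) (fcont HV).
by [].
Qed.

Lemma omega_closed x : closed (omega x).
Proof.
move=> y cly V /nbhs_interior HV N.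
have [y' [Oy' Iy']] := cly _ HV.
exact: Oy' Iy' N.
Qed.

Lemma omega_inv x y : omega x y -> omega x (f y).
Proof.
move=> Oy V HV N.
have [t Nt Vt] := Oy _ (fcont HV) N.
by exists t.+1 => //; apply: leqW.
Qed.

Lemma omega_iter x y m : omega x y -> omega x (iter m f y).
Proof. by move=> Oy; elim: m => [//|m IH]; apply: omega_inv. Qed.

Lemma omega_per (accper : forall x : X, accumulation_point x -> periodic_point f x)
   x y : omega x y -> periodic_point f y.
Proof.
move=> Oy; have [/accper //|] := pselect (accumulation_point y).
rewrite /accumulation_point => /contrapT Hy.
have [t1 _ e1] := Oy _ Hy 0%N.
have [t2 h2 e2] := Oy _ Hy t1.+1.
exists (t2 - t1); split; first by rewrite subn_gt0.
rewrite -[X in iter _ f X]e1 -iterD subnK ?e2 //.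
exact: ltnW.
Qed.

Lemma ultra_split (p : set_system nat) (A B : set nat) : UltraFilter p ->
  p (A `|` B) -> p A \/ p B.
Proof.
move=> Up pAB; have PF : ProperFilter p by exact: ultra_proper.
have [pA|nA] := in_ultra_setVsetC A Up; first by left.
have [pB|nB] := in_ultra_setVsetC B Up; first by right.
exfalso; apply: (filter_not_empty p).
have H : p ((A `|` B) `&` (~` A `&` ~` B)) by apply: filterI => //; apply: filterI.
apply: filterS H.
by move=> n [[An|Bn] [/= nAn nBn]].
Qed.

Lemma finite_notin p : free_ultrafilter p -> forall N, ~ p [set n | (n < N)%N].
Proof.
move=> [Up fr]; elim => [|N IH].
  have -> : [set n | (n < 0)%N] = set0 by apply/seteqP; split => n.
  exact: filter_not_empty.
have -> : [set n | (n < N.+1)%N] = [set n | (n < N)%N] `|` [set N].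
  apply/seteqP; split => n /=.
    by rewrite ltnS leq_eqVlt => /orP[/eqP ->|]; [right|left].
  by case => [/ltnW|->].
by move=> /(ultra_split Up) [/IH|/fr].
Qed.

Lemma plim_omega p x q : free_ultrafilter p ->
  is_plim p (fun n => iter n f x) q -> omega x q.
Proof.
move=> fp hq V HV N; have pV := hq V HV.
have PF : ProperFilter p by case: fp => U _; exact: ultra_proper.
apply: contrapT => hn; apply: (@finite_notin p fp N).
apply: filterS pV => t /= Vt; rewrite ltnNge; apply/negP => Nt.
by apply: hn; exists t.
Qed.

End Top.
Section Top2.
Variables (R : realType) (X : metricType R) (f : X -> X).
Hypothesis Xc : compact [set: X].

Lemma plim_ex p (u : nat -> X) : UltraFilter p -> exists q, is_plim p u q.
Proof.
move=> Up; have PF : ProperFilter p by exact: ultra_proper.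
have [q [_ clq]] := Xc (fmap_proper_filter u PF) (filterT : (u @ p) setT).
exists q => V HV.
have [//|nV] := in_ultra_setVsetC [set n | V (u n)] Up.
have [y [/= nVy Vy]] := clq _ _ (nV : (u @ p) (~` V)) HV.
by [].
Qed.

Lemma piterate_spec p x : UltraFilter p ->
  is_plim p (fun n => iter n f x) (piterate p f x).
Proof. by move=> Up; rewrite /piterate; apply: epsilon_spec; exact: plim_ex. Qed.

End Top2.
Section Baire.
Variables (R : realType) (X : metricType R).
Hypothesis Xc : compact [set: X].
Hypothesis Xcount : countable [set: X].
Local Open Scope ring_scope.

Lemma isolated_ex (W : set X) : closed W -> W !=set0 ->
  exists2 z, W z & exists2 r : R, 0 < r & forall y, W y -> ball z r y -> y = z.
Proof.
move=> cW [c0 Wc0]; apply: contrapT => Hn.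
have Hn' : forall z (r : R), W z -> 0 < r -> exists y, [/\ W y, ball z r y & y != z].
  move=> z r Wz r0; apply: contrapT => H; apply: Hn; exists z => //; exists r => // y Wy bzy.
  apply: contrapT => /eqP yz; apply: H; by exists y.
have [g ginj] : exists g : X -> nat, {in [set: X] &, injective g} by exact/countable_injP.
have step : forall (nc : nat * (X * R)), exists cr' : X * R,
    W nc.2.1 -> 0 < nc.2.2 ->
    [/\ W cr'.1, 0 < cr'.2, closed_ball cr'.1 cr'.2 `<=` ball nc.2.1 nc.2.2
      & forall y, g y = nc.1 -> ~ closed_ball cr'.1 cr'.2 y].
  move=> [n [c r]] /=.
  have [Wc|nWc] := pselect (W c); last by exists (c, r).
  have [r0|nr0] := pselect (0 < r); last by exists (c, r).
  have r20 : 0 < r / 2 by rewrite divr_gt0.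
  have [c1 [Wc1 bc1 nc1]] := Hn' c (r / 2) Wc r20.
  pose c' := if g c == n then c1 else c.
  have gc' : forall y, g y = n -> y != c'.
    move=> y gy; rewrite /c'; case: (eqVneq (g c) n) => [gcn|gcn].
      have [yc1|//] := eqVneq y c1; exfalso; have : c1 = c.
        by apply: ginj; rewrite ?in_setT // -yc1 gy gcn.
      by move=> c1c; move: nc1; rewrite c1c eqxx.
    by have [yc|//] := eqVneq y c; exfalso; move: gcn; rewrite -yc gy eqxx.
  have Wc' : W c' by rewrite /c'; case: (eqVneq (g c) n).
  have bc' : ball c (r / 2) c' by rewrite /c'; case: (eqVneq (g c) n) => _ //; exact: ballxx.
  have [s [s0 sr sy]] : exists s : R, [/\ 0 < s, s <= r / 2 &
      forall y, g y = n -> ~ ball c' s y].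
    have [[y gy]|none] := pselect (exists y, g y = n); last first.
      exists (r / 2); split => // y gy _; by apply: none; exists y.
    exists (Num.min (r / 2) (mdist c' y)); split.
    - by rewrite lt_min r20 /= mdist_gt0 eq_sym gc'.
    - by rewrite ge_min lexx.
    - move=> y' gy'; have yy' : y' = y by apply: ginj; rewrite ?in_setT // gy gy'.
      rewrite yy' ballEmdist /= lt_min => /andP[_]; by rewrite ltxx.
  exists (c', s / 2) => _ _; split => //=.
  - by rewrite divr_gt0.
  - move=> y /(subset_closure_half s0) bs.
    rewrite [r](splitr r); apply: ball_triangle bc' _.
    exact: (le_ball sr).
  - by move=> y gy /(subset_closure_half s0); apply: sy.
have [e he] := @choice _ _ _ step.
pose s := fix s n := if n is m.+1 then e (m, s m) else (c0, 1 : R).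
have inv : forall n, W (s n).1 /\ 0 < (s n).2.
  elim => [|n [IH1 IH2]] //=.
  by have [] := he (n, s n) IH1 IH2.
pose K n := closed_ball (s n).1 (s n).2.
have nest1 : forall n, K n.+1 `<=` K n.
  move=> n y Ky; have [I1 I2] := inv n.
  have [_ _ sub _] := he (n, s n) I1 I2.
  exact/subset_closed_ball/sub.
have nest : forall n m, (n <= m)%N -> K m `<=` K n.
  move=> n m; elim: m => [|m IH]; first by rewrite leqn0 => /eqP ->.
  rewrite leq_eqVlt => /orP[/eqP -> //|hm].
  by move=> y /nest1; apply: IH.
have [v [_ clv]] := Xc (fmap_proper_filter (fun n => (s n).1) eventually_filter)
   (filterT : ((fun n => (s n).1) @ \oo) setT).
have clS : forall S, ((fun n => (s n).1) @ \oo) S -> closure S v.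
  by move=> S GS B nB; apply: clv.
have Wv : W v.
  apply: cW; apply: clS; exists 0%N => // n _; exact: (inv n).1.
have Kv : forall m, K m v.
  move=> m; apply: closed_ball_closed; apply: clS.
  exists m => // n /= hmn; apply: (nest _ _ hmn).
  apply: closed_ballxx; exact: (inv n).2.
have [I1 I2] := inv (g v).
have [_ _ _ ex] := he (g v, s (g v)) I1 I2.
exact: (ex v erefl (Kv (g v).+1)).
Qed.

End Baire.
Lemma crossing (P : nat -> Prop) a b : P a -> ~ P b -> (a <= b)%N ->
  exists t, [/\ (a <= t)%N, (t < b)%N, P t & ~ P t.+1].
Proof.
move=> Pa nPb; elim: b nPb => [|b IH] nPb.
  by rewrite leqn0 => /eqP a0; subst a.
rewrite leq_eqVlt => /orP[/eqP ab|]; first by subst a.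
rewrite ltnS => ab.
have [Pb|nPb'] := pselect (P b); first by exists b.
have [t [h1 h2 h3 h4]] := IH nPb' ab.
by exists t; split => //; apply: ltnW.
Qed.

Lemma finite_min (R : realType) (P : nat -> R -> Prop) :
  (forall i, exists s, (0 < s)%R /\ P i s) ->
  (forall i s t, (0 < t)%R -> (t <= s)%R -> P i s -> P i t) ->
  forall k, exists r, (0 < r)%R /\ forall i, (i < k)%N -> P i r.
Proof.
move=> ex mono; elim => [|k [r [r0 Hr]]]; first by exists 1%R; split.
have [s [s0 Ps]] := ex k.
exists (Num.min r s); split; first by rewrite lt_min r0 s0.
move=> i; rewrite ltnS leq_eqVlt => /orP[/eqP ->|ik].
  by apply: (mono _ s) => //; [rewrite lt_min r0 s0|rewrite ge_min lexx orbT].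
by apply: (mono _ r) => //; [rewrite lt_min r0 s0|rewrite ge_min lexx|apply: Hr].
Qed.

Section Shark.
Variables (R : realType) (X : metricType R) (f : X -> X).
Hypothesis fcont : continuous f.
Hypothesis Xc : compact [set: X].
Hypothesis accper : forall x : X, accumulation_point x -> periodic_point f x.
Local Open Scope ring_scope.

Lemma shark x z : omega f x z ->
  (exists2 rho : R, 0 < rho & forall y, omega f x y -> ball z rho y -> y = z) ->
  omega f x `<=` forbit f z.
Proof.
move=> Oz [rho rho0 iso].
have [k [k1 hk]] := omega_per accper Oz.
have Qi : forall i, exists s : R, 0 < s /\ forall y, omega f x y ->
    ball (iter i f z) s y -> forbit f z y.
  move=> i; pose m := (k * i - i)%N.
  have hm : iter m f (iter i f z) = z := @iter_back _ f k z i k1 hk.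
  have : nbhs (iter i f z) (iter m f @^-1` ball z rho).
    by apply: nbhs_iter => //; rewrite hm; exact: nbhsx_ballx.
  move=> /nbhs_ballP [s s0 sub].
  exists s; split => // y Oy bys.
  have e := iso _ (omega_iter fcont (m:=m) Oy) (sub _ bys).
  have [l [l1 hl]] := omega_per accper Oy.
  by exists (l * m - m)%N => //; rewrite -e; exact: iter_back.
have [r [r0 Qr]] := @finite_min R (fun i s => forall y, omega f x y ->
    ball (iter i f z) s y -> forbit f z y) Qi
  (fun i s t t0 ts Ps y Oy byt => Ps y Oy (le_ball ts byt)) k.
move=> w Ow; apply: contrapT => nw.
have r20 : 0 < r / 2 by rewrite divr_gt0.
pose In y := exists2 i, (i < k)%N & ball (iter i f z) (r / 2) y.
have far : forall y, ball w (r / 2) y -> ~ In y.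
  move=> y bwy [i ik biy]; apply: nw; apply: (Qr i ik _ Ow).
  rewrite [r](splitr r); apply: ball_triangle biy _; exact: ball_sym.
have Inz : In z by exists 0%N => //; exact: ballxx.
pose exit t := In (iter t f x) /\ ~ In (iter t.+1 f x).
have inf : forall N, exists t, (N <= t)%N /\ exit t.
  move=> N.
  have [t1 h1 In1] := Oz _ (nbhsx_ballx z _ r20) N.
  have [t2 h2 nIn2] := Ow _ (nbhsx_ballx w _ r20) t1.
  have [t [ht1 ht2 Pt nPt]] := @crossing (fun t => In (iter t f x)) t1 t2
     (ex_intro2 _ _ 0%N k1 In1 : In (iter t1 f x)) (far _ nIn2) h2.
  by exists t; split => //; apply: leq_trans ht1.
pose E := filter_from [set: nat] (fun N => [set t | (N <= t)%N /\ exit t]).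
have FE : Filter E.
  apply: filter_from_filter; first by exists 0%N.
  move=> i j _ _; exists (maxn i j) => // t [ht et]; split; split => //.
    by apply: leq_trans ht; apply: leq_maxl.
  by apply: leq_trans ht; apply: leq_maxr.
have PE : ProperFilter E.
  apply: filter_from_proper => N _; have [t [h e]] := inf N; by exists t.
have [v [_ clv]] := Xc (fmap_proper_filter (fun t => iter t f x) PE)
   (filterT : ((fun t => iter t f x) @ E) setT).
have clE : forall V, nbhs v V -> forall N, exists t,
    [/\ (N <= t)%N, exit t & V (iter t f x)].
  move=> V HV N.
  have GA : ((fun t => iter t f x) @ E)
      [set y | exists t, [/\ (N <= t)%N, exit t & y = iter t f x]].
    by exists N => // t [ht et]; exists t.
  have [y [[t [ht et ->]] Vy]] := clv _ _ GA HV.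
  by exists t.
have Ov : omega f x v.
  by move=> V HV N; have [t [ht _ Vt]] := clE V HV N; exists t.
have [i ik biv] : exists2 i, (i < k)%N & ball (iter i f z) r v.
  have [t [_ [[i ik bi] _] bt]] := clE _ (nbhsx_ballx v _ r20) 0%N.
  exists i => //; rewrite [r](splitr r); apply: ball_triangle bi _.
  exact: ball_sym.
have [j _ ej] := Qr i ik v Ov biv.
have fv : f v = iter (j.+1 %% k) f z by rewrite -ej -iterS (iter_mod _ hk).
have [t [_ [_ nIn] bt]] := clE _ (fcont (nbhsx_ballx (f v) _ r20)) 0%N.
apply: nIn; exists (j.+1 %% k)%N; first by rewrite ltn_pmod.
by rewrite -fv.
Qed.

End Shark.
Lemma nbhs_avoid (R : realType) (X : metricType R) (u : nat -> X) (y : X) N :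
  (forall t, (t < N)%N -> y != u t) ->
  nbhs y [set z | forall t, (t < N)%N -> z != u t].
Proof.
elim: N => [|N IH] H.
  by apply: filterE => z t.
have h1 := IH (fun t tN => H t (ltnW tN)).
have yN : (0 < mdist y (u N))%R by rewrite mdist_gt0; apply: H.
have h2 := nbhsx_ballx y _ yN.
have h12 : nbhs y ([set z | forall t, (t < N)%N -> z != u t] `&` ball y (mdist y (u N))).
  exact: filterI.
apply: filterS h12 => z [hz bz] t; rewrite ltnS leq_eqVlt => /orP[/eqP ->|tN].
  apply/negP => /eqP zu; move: bz; rewrite zu ballEmdist /= ltxx //.
exact: hz.
Qed.

Section Main.
Variables (R : realType) (X : metricType R) (f : X -> X).
Hypothesis fcont : continuous f.
Hypothesis Xc : compact [set: X].
Hypothesis Xcount : countable [set: X].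
Hypothesis accper : forall x : X, accumulation_point x -> periodic_point f x.

Lemma omega_orbit x c : omega f x c -> omega f x `<=` forbit f c.
Proof.
move=> Oc.
have [z Wz [r r0 iso]] := isolated_ex Xc Xcount (@omega_closed _ _ f x) (ex_intro _ c Oc).
have sub := shark fcont Xc accper Wz (ex_intro2 _ _ r r0 iso).
move=> y Oy.
exact: (orbit_sub' (omega_per accper Wz) (sub c Oc) (sub y Oy)).
Qed.
End Main.

Theorem theorem3p9 (R : realType) (X : metricType R) (f : X -> X)
  (Xcompact : compact [set: X]) (Xcountable : countable [set: X])
  (fcont : continuous f)
  (accper : forall x : X, accumulation_point x -> periodic_point f x)
  (a : X) (acc_a : accumulation_point a)
  (an : nat -> X) (b : X)
  (an_cvg : an @ \oo --> a)
  (b_per : periodic_point f b) (b_notin : ~ forbit f a b)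
  (b_cl : forall n : nat, closure (forbit f (an n)) b) :
  forall p : set_system nat, free_ultrafilter p ->
    ~ {for a, continuous (piterate p f)}.
Proof.
move=> p fp fpc.
have Up : UltraFilter p by case: fp.
set g := piterate p f in fpc *.
have [ka [ka1 hka]] := accper a acc_a.
have Oaa : omega f a a.
  move=> V HV N; exists (ka * N)%N; first by rewrite leq_pmull.
  by rewrite iter_per //; exact: nbhs_singleton.
have [j _ ej] := omega_orbit fcont Xcompact Xcountable accper Oaa
  (plim_omega fp (piterate_spec (f:=f) (x:=a) Xcompact Up)).
have [kb [kb1 hkb]] := b_per.
have gan : forall n, forbit f b (g (an n)).
  move=> n; apply: (omega_orbit fcont Xcompact Xcountable accper (x:=an n) (c:=b)); last first.
    exact: (plim_omega fp (piterate_spec (f:=f) (x:=an n) Xcompact Up)).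
  have [[m _ em]|nb] := pselect (forbit f (an n) b).
    move=> V HV N; exists (kb * N + m)%N; first by rewrite (leq_trans (leq_pmull N kb1)) // leq_addr.
    by rewrite iterD em iter_per //; exact: nbhs_singleton.
  move=> V HV N.
  have hav := @nbhs_avoid R X (fun t => iter t f (an n)) b N
    (fun t _ => introN eqP (fun e => nb (ex_intro2 _ _ t I (esym e)))).
  have [y [[t _ <-] [Vt ht]]] := b_cl n _ (filterI HV hav).
  exists t => //; rewrite leqNgt; apply/negP => tN.
  by move: (ht t tN); rewrite eqxx.
have cvg1 : (g \o an) @ \oo --> g a by apply: cvg_comp an_cvg fpc.
have avoid : nbhs (g a) [set z | forall t, (t < kb)%N -> z != iter t f b].
  apply: nbhs_avoid => t tk; apply/negP => /eqP e.
  apply: b_notin; exists (kb * t - t + j)%N => //.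
  by rewrite iterD ej -/g e iter_back.
have [N _ hN] := cvg1 _ avoid.
have [i _ ei] := gan N.
have := hN N (leqnn N) (i %% kb)%N; rewrite ltn_pmod // /= -ei.
by rewrite -(iter_mod _ hkb) eqxx => /(_ isT).
Qed.
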